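(* Let $a=a_0+\underline a$ and $b=b_0+\underline b$ be paravectors in $\mathrm{Cl}_{0,7}$, and write $e=e_{1234567}$. Then \begin{align*} 16[abI]_0&=a_0b_0-\underline a\cdot\underline b,\\ 16[abI]_1&=a_0\underline b+\underline ab_0-[(\underline a\wedge\underline b)W]_1,\\ 16[abI]_2&=\underline a\wedge\underline b-[(a_0\underline b+\underline ab_0)W]_2+[(\underline a\wedge\underline b)We]_2,\\ 16[abI]_3&=-(a_0b_0-\underline a\cdot\underline b)W+[(a_0\underline b+\underline ab_0)We]_3-[(\underline a\wedge\underline b)W]_3,\\ 16[abI]_4&=(a_0b_0-\underline a\cdot\underline b)We-[(a_0\underline b+\underline ab_0)W]_4+[(\underline a\wedge\underline b)We]_4,\\ 16[abI]_5&=[(a_0\underline b+\underline ab_0)We]_5-[(\underline a\wedge\underline b)W]_5-(\underline a\wedge\underline b)e,\\ 16[abI]_6&=-(a_0\underline b+\underline ab_0)e+[(\underline a\wedge\underline b)We]_6,\\ 16[abI]_7&=-(a_0b_0-\underline a\cdot\underline b)e, \end{align*} and $[abI]_k=0\iff[abI]_{7-k}=0$ for $k=0,1,\dots,7$. Moreover, if $[abI]_0=0$, then the conditions $[abI]_j=0$, $j=2,3,4,5$, are pairwise equivalent. In particular, if $[abI]_0=[abI]_1=[abI]_2=0$, then $abI=0$.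
   Context: $\mathrm{Cl}_{0,7}$ is the real associative Clifford algebra generated by $e_1,\dots,e_7$ with $e_ie_j+e_je_i=-2\delta_{ij}$; $e_{i_1\cdots i_k}=e_{i_1}\cdots e_{i_k}$; $[c]_k$ denotes the grade-$k$ part of $c\in\mathrm{Cl}_{0,7}$. Paravectors are elements $x_0+\underline x$ with $\underline x=\sum_{i=1}^7x_ie_i$. For vectors: $\underline a\cdot\underline b=\sum_ia_ib_i$ and $\underline a\wedge\underline b=\sum_{1\le i\ne j\le7}a_ib_je_ie_j$. $W=e_{123}+e_{145}+e_{176}+e_{246}+e_{257}+e_{347}+e_{365}$, and $I=I^-=\frac1{16}(1+We_{1234567})(1-e_{1234567})$. *)

(* Defs.v *)
(* Real Clifford algebra Cl_{0,7}, modelled as coefficient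
   functions on blades (subsets of {1,...,7}, encoded as {set 'I_7} with
   generator e_i  <->  index i-1), with coefficients in a real field R. *)
From HB Require Import structures.
From mathcomp Require Import all_boot all_order all_algebra.
Unset Printing Implicit Defensive.
Import Order.TTheory GRing.Theory Num.Theory.
Local Open Scope ring_scope.

Notation cl R := {ffun {set 'I_7} -> R^o}.

(* the basis blade e_A (indices in increasing order) *)
Definition blade (R : realFieldType) (S : {set 'I_7}) : cl R :=
  [ffun T => (T == S)%:R].

(* sign of e_A e_B = sgn A B * e_(A symdiff B), using e_i e_j = - e_j e_i
   (i <> j) and e_i^2 = -1 *)
Definition clsgn (R : realFieldType) (A B : {set 'I_7}) : R :=
  (-1) ^+ (#| [set p : ('I_7 * 'I_7)%type | (p.1 \in A) && (p.2 \in B) && (p.2 < p.1)%N ] |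
           + #|A :&: B|).

Definition clmul {R : realFieldType} (x y : cl R) : cl R :=
  \sum_(A : {set 'I_7}) \sum_(B : {set 'I_7})
     (x A * y B * clsgn R A B) *: blade R ((A :\: B) :|: (B :\: A)).

Definition clsc (R : realFieldType) (c : R) : cl R := c *: blade R set0.

Definition gen (R : realFieldType) (i : nat) : cl R := blade R [set inord i.-1].

Definition grade {R : realFieldType} (k : nat) (x : cl R) : cl R :=
  [ffun A : {set 'I_7} => if #|A| == k then x A else 0].

(* vector x = sum_{i=1}^7 x_i e_i, coefficients x : 'I_7 -> R (x i = x_{i+1}) *)
Definition vec {R : realFieldType} (x : 'I_7 -> R) : cl R :=
  \sum_(i < 7) x i *: gen R i.+1.

Definition vdot {R : realFieldType} (a b : 'I_7 -> R) : R := \sum_(i < 7) a i * b i.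

Definition vwedge {R : realFieldType} (a b : 'I_7 -> R) : cl R :=
  \sum_(i < 7) \sum_(j < 7 | i != j)
     (a i * b j) *: clmul (gen R i.+1) (gen R j.+1).

Definition e3 (R : realFieldType) (i j k : nat) : cl R :=
  clmul (clmul (gen R i) (gen R j)) (gen R k).

Definition Wcl (R : realFieldType) : cl R :=
  e3 R 1 2 3 + e3 R 1 4 5 + e3 R 1 7 6 + e3 R 2 4 6 + e3 R 2 5 7
  + e3 R 3 4 7 + e3 R 3 6 5.

Definition e7 (R : realFieldType) : cl R :=
  clmul (clmul (clmul (clmul (clmul (clmul (gen R 1) (gen R 2)) (gen R 3))
     (gen R 4)) (gen R 5)) (gen R 6)) (gen R 7).

Definition Icl (R : realFieldType) : cl R :=
  (16%:R)^-1 *: clmul (clsc R 1 + clmul (Wcl R) (e7 R)) (clsc R 1 - e7 R).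

Definition para {R : realFieldType} (a0 : R) (a : 'I_7 -> R) : cl R :=
  clsc R a0 + vec a.

(* Main.v *)
Require Import Defs.
From Stdlib Require Import PeanoNat Lia.
From HB Require Import structures.
From mathcomp Require Import all_boot all_order all_algebra.
From mathcomp.algebra_tactics Require Import ring.
From mathcomp Require Import zify.
Import Order.TTheory GRing.Theory Num.Theory.
Local Open Scope ring_scope.

Definition term := ((nat * seq nat) * int)%type.
Definition code (t : term) : nat := t.1.1.
Definition mon (t : term) : seq nat := t.1.2.
Definition cf (t : term) : int := t.2.

Definition sumN7 (f : nat -> nat) : nat := foldr (fun i acc => (f i + acc)%N) 0%N (iota 0 7).
Definition sgn_nat (m n : nat) : nat :=
  (sumN7 (fun i => sumN7 (fun j => Nat.testbit m i && Nat.testbit n j && (j < i)%N))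
   + sumN7 (fun i => Nat.testbit m i && Nat.testbit n i))%N.
Definition popc (m : nat) : nat := sumN7 (fun i => Nat.testbit m i).

Definition mulT (t1 t2 : term) : term :=
  ((Nat.lxor (code t1) (code t2), sort leq (mon t1 ++ mon t2)),
   cf t1 * cf t2 * (-1) ^+ sgn_nat (code t1) (code t2)).
Definition mulS (s1 s2 : seq term) : seq term := [seq mulT t1 t2 | t1 <- s1, t2 <- s2].
Definition negS (s : seq term) : seq term := [seq (t.1, - cf t) | t <- s].
Definition gradeS (k : nat) (s : seq term) : seq term := [seq t <- s | popc (code t) == k].
Definition plist := seq (seq nat * int).
Definition scaleS (P : plist) (s : seq term) : seq term :=
  [seq ((code t, sort leq (p.1 ++ mon t)), p.2 * cf t) | p <- P, t <- s].

Definition key (t : term) := t.1.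
Definition coefZ (s : seq term) (k : nat * seq nat) : int :=
  foldr (fun t acc => if key t == k then cf t + acc else acc) 0 s.
Definition eqcheck (s1 s2 : seq term) : bool :=
  all (fun k => coefZ s1 k == coefZ s2 k) (undup (map key s1 ++ map key s2)).

Definition dec (m : nat) : {set 'I_7} := [set i : 'I_7 | Nat.testbit m i].

Section Eval.
Variable R : realFieldType.
Variable env : nat -> R.

Definition evalM (m : seq nat) : R := \prod_(i <- m) env i.
Definition evalT (t : term) : cl R := ((cf t)%:~R * evalM (mon t)) *: blade R (dec (code t)).
Definition evalS (s : seq term) : cl R := \sum_(t <- s) evalT t.
Definition evalP (P : plist) : R := \sum_(p <- P) p.2%:~R * evalM p.1.

End Eval.
Arguments evalM {R}. Arguments evalT {R}. Arguments evalS {R}. Arguments evalP {R}.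

Definition ONE : seq term := [:: ((0%N, [::]), 1)].
Definition Gen (i : nat) : seq term := [:: ((Nat.pow 2 i.-1, [::]), 1)].
Definition RW : seq term :=
  mulS (mulS (Gen 1) (Gen 2)) (Gen 3) ++ mulS (mulS (Gen 1) (Gen 4)) (Gen 5) ++ mulS (mulS (Gen 1) (Gen 7)) (Gen 6)
  ++ mulS (mulS (Gen 2) (Gen 4)) (Gen 6) ++ mulS (mulS (Gen 2) (Gen 5)) (Gen 7)
  ++ mulS (mulS (Gen 3) (Gen 4)) (Gen 7) ++ mulS (mulS (Gen 3) (Gen 6)) (Gen 5).
Definition Rel : seq term :=
  mulS (mulS (mulS (mulS (mulS (mulS (Gen 1) (Gen 2)) (Gen 3)) (Gen 4)) (Gen 5)) (Gen 6)) (Gen 7).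
Definition RI : seq term := mulS (ONE ++ mulS RW Rel) (ONE ++ negS Rel).
Definition PA : seq term := ((0%N, [:: 0%N]), 1) :: [seq ((Nat.pow 2 i, [:: i.+1]), 1) | i <- iota 0 7].
Definition PB : seq term := ((0%N, [:: 8%N]), 1) :: [seq ((Nat.pow 2 i, [:: (i + 9)%N]), 1) | i <- iota 0 7].
Definition Xab : seq term := mulS (mulS PA PB) RI.


Section Lemmas.
Variable R : realFieldType.

Lemma clmulDl (x y z : cl R) : clmul (x + y) z = clmul x z + clmul y z.
Proof.
rewrite /clmul -big_split /=; apply: eq_bigr => A _.
rewrite -big_split /=; apply: eq_bigr => B _.
by rewrite ffunE !mulrDl scalerDl.
Qed.

Lemma clmulDr (x y z : cl R) : clmul x (y + z) = clmul x y + clmul x z.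
Proof.
rewrite /clmul -big_split /=; apply: eq_bigr => A _.
rewrite -big_split /=; apply: eq_bigr => B _.
by rewrite ffunE mulrDr !mulrDl scalerDl.
Qed.

Lemma clmulZl (c : R) (x y : cl R) : clmul (c *: x) y = c *: clmul x y.
Proof.
rewrite /clmul scaler_sumr; apply: eq_bigr => A _.
rewrite scaler_sumr; apply: eq_bigr => B _.
by rewrite ffunE scalerA !mulrA.
Qed.

Lemma clmulZr (c : R) (x y : cl R) : clmul x (c *: y) = c *: clmul x y.
Proof.
rewrite /clmul scaler_sumr; apply: eq_bigr => A _.
rewrite scaler_sumr; apply: eq_bigr => B _.
rewrite ffunE scalerA; congr (_ *: _).
by rewrite /GRing.scale /= mulrCA !mulrA.
Qed.

Lemma clmul0l (y : cl R) : clmul 0 y = 0.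
Proof. by rewrite /clmul big1 // => A _; rewrite big1 // => B _; rewrite ffunE !mul0r scale0r. Qed.
Lemma clmul0r (y : cl R) : clmul y 0 = 0.
Proof. by rewrite /clmul big1 // => A _; rewrite big1 // => B _; rewrite ffunE mulr0 mul0r scale0r. Qed.

Lemma clmul_suml I (r : seq I) (F : I -> cl R) y :
  clmul (\sum_(i <- r) F i) y = \sum_(i <- r) clmul (F i) y.
Proof. exact: (big_morph (fun x => clmul x y) (fun a b => clmulDl a b y) (clmul0l y)). Qed.
Lemma clmul_sumr I (r : seq I) (F : I -> cl R) y :
  clmul y (\sum_(i <- r) F i) = \sum_(i <- r) clmul y (F i).
Proof. exact: (big_morph (fun x => clmul y x) (fun a b => clmulDr y a b) (clmul0r y)). Qed.

Lemma clmul_blade A B : clmul (blade R A) (blade R B) = clsgn R A B *: blade R ((A :\: B) :|: (B :\: A)).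
Proof.
rewrite /clmul (bigD1 A) //=.
have -> : \sum_(A' | A' != A) \sum_B' (blade R A A' * blade R B B' * clsgn R A' B') *: blade R ((A' :\: B') :|: (B' :\: A')) = 0.
  by apply: big1 => A' nA; apply: big1 => B' _; rewrite !ffunE (negbTE nA) !mul0r scale0r.
rewrite addr0 (bigD1 B) //=.
have -> : \sum_(B' | B' != B) (blade R A A * blade R B B' * clsgn R A B') *: blade R ((A :\: B') :|: (B' :\: A)) = 0.
  by apply: big1 => B' nB; rewrite !ffunE (negbTE nB) mulr0 mul0r scale0r.
by rewrite addr0 !ffunE !eqxx !mul1r.
Qed.

End Lemmas.


Lemma sumN7E (f : nat -> nat) : sumN7 f = (\sum_(i < 7) f i)%N.
Proof.
rewrite -(big_mkord xpredT f) /index_iota subn0 /=.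
by rewrite !big_cons big_nil /sumN7 /=.
Qed.

Lemma card_pair (P : 'I_7 -> 'I_7 -> bool) :
  #|[set p : ('I_7 * 'I_7)%type | P p.1 p.2]| = (\sum_(i < 7) \sum_(j < 7) P i j)%N.
Proof.
transitivity (\sum_(p : 'I_7 * 'I_7 | P p.1 p.2) 1)%N; first by rewrite sum1dep_card.
rewrite pair_big /= big_mkcond /=.
by apply: eq_big => [[i j]|[i j] _] //=; case: (P i j).
Qed.

Lemma card_sum7 (A : {set 'I_7}) : #|A| = (\sum_(i < 7) (i \in A))%N.
Proof. by rewrite -sum1_card big_mkcond /=; apply: eq_bigr => i _; case: (i \in A). Qed.

Lemma dec_lxor m n : dec (Nat.lxor m n) = (dec m :\: dec n) :|: (dec n :\: dec m).
Proof.
apply/setP => i; rewrite !inE Nat.lxor_spec.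
by case: (Nat.testbit m i); case: (Nat.testbit n i).
Qed.

Lemma card_dec m : #|dec m| = popc m.
Proof. by rewrite card_sum7 /popc sumN7E; apply: eq_bigr => i _; rewrite inE. Qed.

Lemma clsgn_dec (R : realFieldType) m n : clsgn R (dec m) (dec n) = (-1) ^+ sgn_nat m n.
Proof.
rewrite /clsgn /sgn_nat.
rewrite (card_pair (fun i j => (i \in dec m) && (j \in dec n) && (j < i)%N)).
rewrite card_sum7 !sumN7E; congr (_ ^+ (_ + _))%N.
  apply: eq_bigr => i _; rewrite sumN7E; apply: eq_bigr => j _; by rewrite !inE.
by apply: eq_bigr => i _; rewrite !inE.
Qed.

Lemma dec0 : dec 0 = set0.
Proof. by apply/setP => i; rewrite !inE Nat.bits_0. Qed.

Lemma dec_pow2 i : (i < 7)%N -> dec (Nat.pow 2 i) = [set inord i].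
Proof.
move=> hi; apply/setP => j; rewrite !inE Nat.pow2_bits_eqb.
case: Nat.eqb_spec => [->|ne]; first by apply/esym/eqP/val_inj; rewrite /= inordK.
apply/esym/negbTE/eqP => ej; apply: ne; by rewrite ej /= inordK.
Qed.

Lemma dec7_inj m n : (m < 128)%N -> (n < 128)%N -> dec m = dec n -> m = n.
Proof.
have big : forall a k, (a < 128)%N -> (7 <= k)%N -> Nat.testbit a k = false.
  move=> a k ha hk; case: a ha => [|a] ha; first exact: Nat.bits_0.
  apply: Nat.bits_above_log2.
  have h1 : (Nat.log2 a.+1 < 7)%coq_nat.
    apply Nat.log2_lt_pow2; [lia | simpl; lia].
  lia.
move=> hm hn hd; apply: Nat.bits_inj => k.
case: (ltnP k 7) => hk; last by rewrite !big.
have := congr1 (fun S : {set 'I_7} => (Ordinal hk) \in S) hd.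
by rewrite /= !inE.
Qed.


Section Eval2.
Variable R : realFieldType.
Variable env : nat -> R.

Lemma evalM_sort m : evalM env (sort leq m) = evalM env m.
Proof. by apply: perm_big; rewrite perm_sort. Qed.

Lemma evalM_cat m1 m2 : evalM env (m1 ++ m2) = evalM env m1 * evalM env m2.
Proof. by rewrite /evalM big_cat. Qed.

Lemma evalT_mul t1 t2 : clmul (evalT env t1) (evalT env t2) = evalT env (mulT t1 t2).
Proof.
rewrite /evalT clmulZl clmulZr clmul_blade scalerA scalerA clsgn_dec -dec_lxor.
congr (_ *: _); rewrite /mulT /code /mon /cf /= evalM_sort evalM_cat.
rewrite !intrM rmorphXn /= rmorphN1.
rewrite /GRing.scale /=; ring.
Qed.

Lemma evalS_cat s1 s2 : evalS env (s1 ++ s2) = evalS env s1 + evalS env s2.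
Proof. by rewrite /evalS big_cat. Qed.

Lemma evalS_mul s1 s2 : clmul (evalS env s1) (evalS env s2) = evalS env (mulS s1 s2).
Proof.
rewrite /evalS /mulS big_allpairs_dep clmul_suml; apply: eq_bigr => t1 _.
by rewrite clmul_sumr; apply: eq_bigr => t2 _; rewrite evalT_mul.
Qed.

Lemma evalS_neg s : - evalS env s = evalS env (negS s).
Proof.
rewrite /evalS /negS big_map -sumrN; apply: eq_bigr => t _.
by rewrite /evalT /cf /mon /code /= intrN mulNr scaleNr.
Qed.

Lemma evalS_scale P s : evalP env P *: evalS env s = evalS env (scaleS P s).
Proof.
rewrite /evalS /evalP /scaleS big_allpairs_dep scaler_suml; apply: eq_bigr => p _.
rewrite scaler_sumr; apply: eq_bigr => t _.
rewrite /evalT /cf /mon /code /= scalerA evalM_sort evalM_cat intrM.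
congr (_ *: _); rewrite /GRing.scale /=; ring.
Qed.

Lemma gradeD k (x y : cl R) : grade k (x + y) = grade k x + grade k y.
Proof. by apply/ffunP => A; rewrite !ffunE; case: (#|A| == k); rewrite ?addr0. Qed.
Lemma grade0 k : grade k (0 : cl R) = 0.
Proof. by apply/ffunP => A; rewrite !ffunE; case: (#|A| == k). Qed.
Lemma gradeZ k c (x : cl R) : grade k (c *: x) = c *: grade k x.
Proof. by apply/ffunP => A; rewrite !ffunE; case: (#|A| == k); rewrite ?scaler0. Qed.
Lemma gradeN k (x : cl R) : grade k (- x) = - grade k x.
Proof. by apply/ffunP => A; rewrite !ffunE; case: (#|A| == k); rewrite ?oppr0. Qed.

Lemma evalS_grade k s : grade k (evalS env s) = evalS env (gradeS k s).
Proof.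
rewrite /evalS /gradeS big_filter.
rewrite (big_morph (grade k) (gradeD k) (grade0 k)).
rewrite [RHS]big_mkcond; apply: eq_bigr => t _.
rewrite /evalT gradeZ; case: ifP => h.
  congr (_ *: _); apply/ffunP => A; rewrite !ffunE.
  case: (boolP (A == dec (code t))) => [/eqP ->|hA]; first by rewrite card_dec h.
  by case: (#|A| == k).
rewrite -[RHS](scaler0 _ ((cf t)%:~R * evalM env (mon t))); congr (_ *: _).
apply/ffunP => A; rewrite !ffunE.
case: (boolP (A == dec (code t))) => [/eqP ->|hA]; first by rewrite card_dec h.
by case: (#|A| == k).
Qed.

Lemma coefZ_cons (t : term) (s : seq term) (k : nat * seq nat) : coefZ (t :: s) k = (if key t == k then cf t else 0) + coefZ s k.
Proof. by rewrite /=; case: ifP; rewrite ?add0r. Qed.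

Lemma evalS_group s (U : seq (nat * seq nat)) : uniq U -> {subset map key s <= U} ->
  evalS env s = \sum_(k <- U) ((coefZ s k)%:~R * evalM env k.2) *: blade R (dec k.1).
Proof.
move=> uU; elim: s => [|t s IH] sub.
  by rewrite /evalS big_nil big1 // => k _; rewrite /= mul0r scale0r.
rewrite /evalS big_cons -/(evalS env s) IH; last by move=> x hx; apply: sub; rewrite inE hx orbT.
have kt : key t \in U by apply: sub; rewrite inE eqxx.
rewrite [RHS](eq_bigr (fun k => ((if key t == k then cf t else 0)%:~R * evalM env k.2) *: blade R (dec k.1)
    + ((coefZ s k)%:~R * evalM env k.2) *: blade R (dec k.1))); last first.
  by move=> k _; rewrite coefZ_cons intrD mulrDl scalerDl.
rewrite big_split /=; congr (_ + _).
rewrite (bigD1_seq (key t)) //= eqxx big1 ?addr0 //.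
move=> k /negbTE nk; by rewrite eq_sym nk mul0r scale0r.
Qed.

Lemma eqcheckP s1 s2 : eqcheck s1 s2 -> evalS env s1 = evalS env s2.
Proof.
move=> /allP h.
have uU := undup_uniq (map key s1 ++ map key s2).
rewrite (evalS_group s1 _ uU) => [|x hx]; last by rewrite mem_undup mem_cat hx.
rewrite [RHS](evalS_group s2 _ uU) => [|x hx]; last by rewrite mem_undup mem_cat hx orbT.
rewrite big_seq_cond [RHS]big_seq_cond; apply: eq_bigr => k /andP[hk _].
by rewrite (eqP (h k hk)).
Qed.

End Eval2.


Definition VA : seq term := [seq ((Nat.pow 2 i, [:: i.+1]), 1) | i <- iota 0 7].
Definition VB : seq term := [seq ((Nat.pow 2 i, [:: (i + 9)%N]), 1) | i <- iota 0 7].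
Definition Pdot : plist := [seq ([:: i.+1; (i + 9)%N], 1) | i <- iota 0 7].
Definition Ps : plist := ([:: 0%N; 8%N], 1) :: [seq (p.1, - p.2) | p <- Pdot].

Section Conn.
Variable R : realFieldType.
Variables (a0 b0 : R) (a b : 'I_7 -> R).
Definition env (k : nat) : R :=
  if (k < 8)%N then (if k == 0%N then a0 else a (inord k.-1))
  else (if k == 8%N then b0 else b (inord (k - 9))).

Lemma sum_iota7 (V : nmodType) (F : nat -> V) : \sum_(i <- iota 0 7) F i = \sum_(i < 7) F i.
Proof. by rewrite -(big_mkord xpredT F). Qed.

Lemma evalS1 t : evalS env [:: t] = evalT env t.
Proof. by rewrite /evalS big_seq1. Qed.
Lemma evalS_cons t s : evalS env (t :: s) = evalT env t + evalS env s.
Proof. by rewrite /evalS big_cons. Qed.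
Lemma evalP_cons p P : evalP env (p :: P) = p.2%:~R * evalM env p.1 + evalP env P.
Proof. by rewrite /evalP big_cons. Qed.

Lemma evalS_one : evalS env ONE = blade R set0.
Proof. by rewrite evalS1 /evalT /evalM /= big_nil dec0 mulr1 scale1r. Qed.

Lemma clsc_eval c : clsc R c = c *: evalS env ONE.
Proof. by rewrite evalS_one. Qed.

Lemma gen_eval i : (0 < i <= 7)%N -> gen R i = evalS env (Gen i).
Proof.
move=> /andP[h1 h2]; rewrite evalS1 /evalT /evalM /= big_nil mulr1 scale1r.
by rewrite dec_pow2 //; case: i h1 h2.
Qed.

Lemma vecA_eval : vec a = evalS env VA.
Proof.
rewrite /evalS /VA big_map sum_iota7 /vec; apply: eq_bigr => i _.
rewrite /evalT /evalM /= big_seq1 mul1r dec_pow2 // /env /=.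
have -> : (i.+1 < 8)%N = true by exact: ltn_ord i.
rewrite (@inord_val 6) /gen /=; by rewrite inord_val.
Qed.

Lemma vecB_eval : vec b = evalS env VB.
Proof.
rewrite /evalS /VB big_map sum_iota7 /vec; apply: eq_bigr => i _.
rewrite /evalT /evalM /= big_seq1 mul1r dec_pow2 // /env /=.
have -> : (i + 9 < 8)%N = false by lia.
have -> : (i + 9 == 8)%N = false by lia.
rewrite addnK (@inord_val 6) /gen /=; by rewrite inord_val.
Qed.

Lemma paraA_eval : para a0 a = evalS env PA.
Proof.
rewrite /para vecA_eval /PA [RHS]evalS_cons; congr (_ + _).
by rewrite /evalT /evalM /= big_seq1 mul1r dec0.
Qed.

Lemma paraB_eval : para b0 b = evalS env PB.
Proof.
rewrite /para vecB_eval /PB [RHS]evalS_cons; congr (_ + _).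
by rewrite /evalT /evalM /= big_seq1 mul1r dec0.
Qed.

Lemma vdot_eval : vdot a b = evalP env Pdot.
Proof.
rewrite /evalP /Pdot big_map sum_iota7 /vdot; apply: eq_bigr => i _.
rewrite /evalM /= big_cons big_seq1 mul1r /env /=.
have -> : (i + 9 < 8)%N = false by lia.
have -> : (i + 9 == 8)%N = false by lia.
by rewrite ltnS (ltn_ord i) addnK !inord_val.
Qed.

Lemma evalP_neg (P : plist) : evalP env [seq (p.1, - p.2) | p <- P] = - evalP env P.
Proof.
by rewrite /evalP big_map -sumrN; apply: eq_bigr => p _; rewrite /= intrN mulNr.
Qed.

Lemma s_eval : a0 * b0 - vdot a b = evalP env Ps.
Proof.
rewrite /Ps evalP_cons evalP_neg vdot_eval.
by congr (_ + _); rewrite /evalM /= big_cons big_seq1 mul1r.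
Qed.

Lemma a0_eval : a0 = evalP env [:: ([:: 0%N], 1)].
Proof. by rewrite /evalP /evalM big_seq1 /= big_seq1 mul1r. Qed.
Lemma b0_eval : b0 = evalP env [:: ([:: 8%N], 1)].
Proof. by rewrite /evalP /evalM big_seq1 /= big_seq1 mul1r. Qed.

Lemma gen_sq i : (i < 7)%N -> clmul (gen R i.+1) (gen R i.+1) = - blade R set0.
Proof.
move=> hi; rewrite gen_eval // evalS_mul -evalS_one evalS_neg.
apply: eqcheckP.
by case: i hi => [|[|[|[|[|[|[|]]]]]]].
Qed.

Lemma vwedge_eq : vwedge a b = clmul (vec a) (vec b) + clsc R (vdot a b).
Proof.
rewrite /vec clmul_suml.
have -> : \sum_(i < 7) clmul (a i *: gen R i.+1) (\sum_(i0 < 7) b i0 *: gen R i0.+1)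
   = \sum_(i < 7) ((a i * b i) *: (- blade R set0) +
        \sum_(j < 7 | i != j) (a i * b j) *: clmul (gen R i.+1) (gen R j.+1)).
  apply: eq_bigr => i _; rewrite clmul_sumr (bigD1 i) //=.
  rewrite clmulZl clmulZr scalerA gen_sq //; congr (_ + _).
  apply: eq_big => [j|j _]; first by rewrite eq_sym.
  by rewrite clmulZl clmulZr scalerA.
rewrite big_split /= addrC -addrA.
suff -> : \sum_(i < 7) (a i * b i) *: - blade R set0 + clsc R (vdot a b) = 0 by rewrite addr0.
rewrite /clsc /vdot scaler_suml -big_split /=; apply: big1 => i _.
by rewrite scalerN addNr.
Qed.

End Conn.


Definition RV : seq term := scaleS [:: ([:: 0%N], 1)] VB ++ scaleS [:: ([:: 8%N], 1)] VA.
Definition RWw : seq term := mulS VA VB ++ scaleS Pdot ONE.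

Section Main.
Variable R : realFieldType.
Variables (a0 b0 : R) (a b : 'I_7 -> R).
Local Notation env := (env R a0 b0 a b).

Lemma W_eval : Wcl R = evalS env RW.
Proof.
rewrite /Wcl /e3 !(gen_eval _ a0 b0 a b) // !evalS_mul -!evalS_cat /RW.
by rewrite !catA.
Qed.

Lemma e_eval : e7 R = evalS env Rel.
Proof. by rewrite /e7 !(gen_eval _ a0 b0 a b) // !evalS_mul. Qed.

Lemma I_eval : Icl R = (16%:R)^-1 *: evalS env RI.
Proof.
rewrite /Icl (clsc_eval _ a0 b0 a b) scale1r W_eval e_eval evalS_mul evalS_neg -!evalS_cat evalS_mul.
by [].
Qed.

Lemma abI_eval : clmul (clmul (para a0 a) (para b0 b)) (Icl R) = (16%:R)^-1 *: evalS env Xab.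
Proof. by rewrite I_eval clmulZr (paraA_eval _ a0 b0 a b) (paraB_eval _ a0 b0 a b) !evalS_mul. Qed.

Lemma v_eval : a0 *: vec b + b0 *: vec a = evalS env RV.
Proof.
by rewrite /RV evalS_cat -!evalS_scale -(a0_eval _ a0 b0 a b) -(b0_eval _ a0 b0 a b) -(vecA_eval _ a0 b0 a b) -(vecB_eval _ a0 b0 a b).
Qed.

Lemma w_eval : vwedge a b = evalS env RWw.
Proof.
by rewrite (vwedge_eq _ a0 b0 a b) (clsc_eval _ a0 b0 a b) (vecA_eval _ a0 b0 a b) (vecB_eval _ a0 b0 a b) (vdot_eval _ a0 b0 a b) evalS_mul evalS_scale -evalS_cat.
Qed.

Lemma s16 (x : cl R) : 16%:R *: ((16%:R)^-1 *: x) = x.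
Proof. by rewrite scalerA mulfV ?scale1r // pnatr_eq0. Qed.

End Main.



Lemma part1_abs (R : realFieldType) (en : nat -> R) (Xs Ws Es Vs Ww Os : seq term) (Ss : plist) :

  eqcheck (gradeS 0 Xs) (scaleS Ss Os) ->
  eqcheck (gradeS 1 Xs) (Vs ++ negS (gradeS 1 (mulS Ww Ws))) ->
  eqcheck (gradeS 2 Xs) ((Ww ++ negS (gradeS 2 (mulS Vs Ws))) ++ gradeS 2 (mulS (mulS Ww Ws) Es)) ->
  eqcheck (gradeS 3 Xs) ((negS (scaleS Ss Ws) ++ gradeS 3 (mulS (mulS Vs Ws) Es)) ++ negS (gradeS 3 (mulS Ww Ws))) ->
  eqcheck (gradeS 4 Xs) ((scaleS Ss (mulS Ws Es) ++ negS (gradeS 4 (mulS Vs Ws))) ++ gradeS 4 (mulS (mulS Ww Ws) Es)) ->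
  eqcheck (gradeS 5 Xs) ((gradeS 5 (mulS (mulS Vs Ws) Es) ++ negS (gradeS 5 (mulS Ww Ws))) ++ negS (mulS Ww Es)) ->
  eqcheck (gradeS 6 Xs) (negS (mulS Vs Es) ++ gradeS 6 (mulS (mulS Ww Ws) Es)) ->
  eqcheck (gradeS 7 Xs) (negS (scaleS Ss Es)) ->
  let X := evalS en Xs in let W := evalS en Ws in let e := evalS en Es in
  let s := evalP en Ss in let v := evalS en Vs in let w := evalS en Ww in
  (grade 0 X = s *: evalS en Os /\
      grade 1 X = v - grade 1 (clmul w W) /\
      grade 2 X = w - grade 2 (clmul v W) + grade 2 (clmul (clmul w W) e) /\
      grade 3 X =
        - (s *: W) + grade 3 (clmul (clmul v W) e) - grade 3 (clmul w W) /\
      grade 4 X =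
        s *: clmul W e - grade 4 (clmul v W) + grade 4 (clmul (clmul w W) e) /\
      grade 5 X =
        grade 5 (clmul (clmul v W) e) - grade 5 (clmul w W) - clmul w e /\
      grade 6 X = - clmul v e + grade 6 (clmul (clmul w W) e) /\
      grade 7 X = - (s *: e)).
Proof.
move=> /eqcheckP h0 /eqcheckP h1 /eqcheckP h2 /eqcheckP h3 /eqcheckP h4 /eqcheckP h5 /eqcheckP h6 /eqcheckP h7.
move=> X W e s v w; rewrite /X /W /e /s /v /w.
rewrite !evalS_grade !evalS_mul !evalS_scale !evalS_grade !evalS_neg -!evalS_cat.
by rewrite (h0 _ en) (h1 _ en) (h2 _ en) (h3 _ en) (h4 _ en) (h5 _ en) (h6 _ en) (h7 _ en).
Qed.

Lemma part1 (R : realFieldType) (a0 b0 : R) (a b : 'I_7 -> R) :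
  let abI := clmul (clmul (para a0 a) (para b0 b)) (Icl R) in
  let W := Wcl R in
  let e := e7 R in
  let s := a0 * b0 - vdot a b in
  let v := a0 *: vec b + b0 *: vec a in
  let w := vwedge a b in
  (16%:R *: grade 0 abI = clsc R s /\
      16%:R *: grade 1 abI = v - grade 1 (clmul w W) /\
      16%:R *: grade 2 abI = w - grade 2 (clmul v W) + grade 2 (clmul (clmul w W) e) /\
      16%:R *: grade 3 abI =
        - (s *: W) + grade 3 (clmul (clmul v W) e) - grade 3 (clmul w W) /\
      16%:R *: grade 4 abI =
        s *: clmul W e - grade 4 (clmul v W) + grade 4 (clmul (clmul w W) e) /\
      16%:R *: grade 5 abI =
        grade 5 (clmul (clmul v W) e) - grade 5 (clmul w W) - clmul w e /\
      16%:R *: grade 6 abI = - clmul v e + grade 6 (clmul (clmul w W) e) /\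
      16%:R *: grade 7 abI = - (s *: e)).
Proof.
move=> abI W e s v w.
rewrite /abI /W /e /s /v /w.
rewrite (abI_eval _ a0 b0 a b).
rewrite (W_eval _ a0 b0 a b) (e_eval _ a0 b0 a b) (s_eval _ a0 b0 a b).
rewrite (v_eval _ a0 b0 a b) (w_eval _ a0 b0 a b) (clsc_eval _ a0 b0 a b).
rewrite !gradeZ !s16.
apply: part1_abs.
all: vm_compute; reflexivity.
Qed.


Definition linc (P : plist) (k : nat) : int :=
  foldr (fun p acc => if p.1 == [:: k] then p.2 + acc else acc) 0 P.
Definition alllin (P : plist) : bool :=
  all (fun p => (size p.1 == 1%N) && (head 0%N p.1 < 8)%N) P.
Definition coefPoly (s : seq term) (C : nat) : plist := [seq (mon t, cf t) | t <- s & code t == C].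
Definition allcodes (s : seq term) : bool := all (fun t => code t < 128)%N s.
Definition allmonlin (s : seq term) : bool :=
  all (fun t => (size (mon t) == 1%N) && (head 0%N (mon t) < 8)%N) s.
Definition good (S : seq term) (Z : seq nat) (k : nat) : bool :=
  has (fun C => [&& (C < 128)%N, alllin (coefPoly S C), linc (coefPoly S C) k != 0 &
     all (fun k' => (k' == k) || (k' \in Z) || (linc (coefPoly S C) k' == 0)) (iota 0 8)]) (map code S).
Definition substS (Q : nat -> plist) (T : seq term) : seq term :=
  flatten [seq (if mon t is [:: k] then scaleS (Q k) [:: ((code t, [::]), cf t)] else [:: t]) | t <- T].

Section Kill.
Variable R : realFieldType.

Lemma evalS_at (en : nat -> R) s C : allcodes s -> (C < 128)%N ->
  (evalS en s) (dec C) = evalP en (coefPoly s C).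
Proof.
move=> /allP hs hC.
rewrite /evalS sum_ffunE /evalP /coefPoly big_map big_filter.
rewrite big_seq_cond [RHS]big_seq_cond [RHS]big_mkcond /= big_mkcond /=.
apply: eq_bigr => t _; rewrite andbT.
case: (boolP (t \in s)) => ht //=.
rewrite ffunE ffunE /=.
have hc := hs t ht.
case: (boolP (code t == C)) => hCt.
  by rewrite (eqP hCt) eqxx /GRing.scale /= mulr1n mulr1.
have -> : (dec C == dec (code t)) = false.
  apply/negbTE/eqP => hd; move/eqP: hCt; apply; exact: (dec7_inj _ _ hc hC (esym hd)).
by rewrite /GRing.scale /= mulr0n mulr0.
Qed.

Lemma linc_cons p P k : linc (p :: P) k = (if p.1 == [:: k] then p.2 else 0) + linc P k.
Proof. by rewrite /=; case: ifP => _; rewrite ?add0r. Qed.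

Lemma evalP_lin (en : nat -> R) P : alllin P ->
  evalP en P = \sum_(k <- iota 0 8) (linc P k)%:~R * en k.
Proof.
elim: P => [|[m z] P IH] hP.
  by rewrite /evalP big_nil big1 // => k _; rewrite mul0r.
move: hP; rewrite /alllin [all _ _]/= -/(alllin P) => /andP[/andP[hs hh] hP].
case: m hs hh => [|k0 [|]] // _ hk0.
rewrite /evalP big_cons -/(evalP en P) IH //.
rewrite [RHS](eq_bigr (fun k => (if k0 == k then z else 0)%:~R * en k + (linc P k)%:~R * en k)); last first.
  move=> k _; rewrite linc_cons /=.
  case: (eqVneq k0 k) => [->|h]; first by rewrite eqxx intrD mulrDl.
  have -> : ([:: k0] == [:: k]) = false by rewrite eqseq_cons (negbTE h).
  by rewrite add0r mul0r add0r.
rewrite big_split /=; congr (_ + _).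
rewrite (bigD1_seq k0) ?iota_uniq //=; last by case: k0 hk0 => [|[|[|[|[|[|[|[|]]]]]]]].
rewrite eqxx big1 ?addr0; first by rewrite /evalM big_seq1.
by move=> k /negbTE; rewrite eq_sym => ->; rewrite mul0r.
Qed.

Lemma kill1 (en : nat -> R) S Z k : allcodes S -> evalS en S = 0 ->
  (forall k', k' \in Z -> en k' = 0) -> good S Z k -> (k < 8)%N -> en k = 0.
Proof.
move=> hS h0 hZ /hasP[C _ /and4P[hC hlin hk hall]] hk8.
have := evalS_at en S C hS hC; rewrite h0 ffunE evalP_lin // => /esym.
rewrite (bigD1_seq k) ?mem_iota ?iota_uniq //=.
rewrite big1_seq ?addr0.
  move/eqP; rewrite mulf_eq0 intr_eq0 (negbTE hk) /=; by move/eqP.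
move=> k' /andP[nk hk']; have := allP hall k' hk'; rewrite (negbTE nk) /=.
case/orP => [/hZ ->|/eqP ->]; by rewrite ?mulr0 ?mul0r.
Qed.

Lemma evalS_linzero (en : nat -> R) T : allmonlin T -> (forall k, (k < 8)%N -> en k = 0) -> evalS en T = 0.
Proof.
move=> /allP hT hz; rewrite /evalS big1_seq // => t /andP[_ ht].
case/andP: (hT t ht); rewrite /evalT /evalM; case: (mon t) => [|k [|]] //= _ hk.
by rewrite big_seq1 hz // mulr0 scale0r.
Qed.

Lemma substS_eval (en : nat -> R) Q T : all (fun t => size (mon t) == 1%N) T ->
  evalS (fun k => evalP en (Q k)) T = evalS en (substS Q T).
Proof.
elim: T => [|t T IH] /=; first by rewrite /evalS !big_nil.
case/andP=> ht hT; rewrite /substS /= evalS_cat -/(substS Q T) -IH //.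
rewrite /evalS big_cons -/(evalS _ T); congr (_ + _).
move: ht; rewrite /evalT; case: (mon t) => [|k [|]] //= _.
rewrite -[RHS]/(evalS en (scaleS (Q k) [:: ((code t, [::]), cf t)])) -evalS_scale.
rewrite /evalS big_seq1 /evalT /evalM /= big_nil big_seq1 scalerA mulr1; congr (_ *: _).
by rewrite /GRing.scale /= mulrC.
Qed.

Lemma kill_main (en : nat -> R) Xs Ts Q j (c : R) : c != 0 ->
  eqcheck Xs (substS Q Ts) -> allmonlin Ts -> allcodes (gradeS 0 Ts) -> allcodes (gradeS j Ts) ->
  good (gradeS 0 Ts) [::] 0 -> all (good (gradeS j Ts) [:: 0%N]) (iota 1 7) ->
  grade 0 (c *: evalS en Xs) = 0 -> grade j (c *: evalS en Xs) = 0 -> c *: evalS en Xs = 0.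
Proof.
move=> hc /eqcheckP hX hlin hc0 hcj g0 gj h0 hj.
have hl1 : all (fun t => size (mon t) == 1%N) Ts.
  by apply/allP => t ht; case/andP: (allP hlin t ht).
set en' := fun k => evalP en (Q k).
have hXT : evalS en Xs = evalS en' Ts by rewrite hX -substS_eval.
have ez : forall i, grade i (c *: evalS en Xs) = 0 -> evalS en' (gradeS i Ts) = 0.
  move=> i; rewrite gradeZ hXT evalS_grade => /eqP; rewrite scaler_eq0 (negbTE hc) /=.
  by move/eqP.
have e0 : en' 0%N = 0.
  by apply: (kill1 _ _ [::] _ hc0 (ez _ h0) _ g0).
have ek : forall k, (k < 8)%N -> en' k = 0.
  case=> [|k] hk; first exact: e0.
  apply: (kill1 _ _ [:: 0%N] _ hcj (ez _ hj)) => //.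
    by move=> k'; rewrite inE => /eqP ->.
  by apply: (allP gj); rewrite mem_iota; lia.
by rewrite hXT evalS_linzero // scaler0.
Qed.

End Kill.


Lemma dual_abs (R : realFieldType) (en : nat -> R) Xs Es (c : R) k :
  eqcheck (gradeS (7 - k) Xs) (negS (mulS (gradeS k Xs) Es)) ->
  grade (7 - k) (c *: evalS en Xs) = - clmul (grade k (c *: evalS en Xs)) (evalS en Es).
Proof.
move=> /eqcheckP h.
by rewrite !gradeZ !evalS_grade clmulZl evalS_mul -scalerN evalS_neg (h _ en).
Qed.

Definition vcode (k : nat) : nat := if k is k'.+1 then Nat.pow 2 k' else 0%N.
Definition TT : seq term := mulS PA RI.
Definition QQ (k : nat) : plist := coefPoly Xab (vcode k).

Lemma bigcheck1 : eqcheck Xab (substS QQ TT) && allmonlin TT && allcodes (gradeS 0 TT)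
   && good (gradeS 0 TT) [::] 0.
Proof. by vm_compute. Qed.

Lemma bigcheck2 : all (fun j => allcodes (gradeS j TT) && all (good (gradeS j TT) [:: 0%N]) (iota 1 7)) (iota 1 6).
Proof. by vm_compute. Qed.

Lemma bigcheck3 : all (fun k => eqcheck (gradeS (7 - k) Xab) (negS (mulS (gradeS k Xab) Rel))) (iota 0 8).
Proof. by vm_compute. Qed.



Theorem lemma5p1 (R : realFieldType) (a0 b0 : R) (a b : 'I_7 -> R) :
  let abI := clmul (clmul (para a0 a) (para b0 b)) (Icl R) in
  let W := Wcl R in
  let e := e7 R in
  let s := a0 * b0 - vdot a b in
  let v := a0 *: vec b + b0 *: vec a in
  let w := vwedge a b in
  (16%:R *: grade 0 abI = clsc R s /\
      16%:R *: grade 1 abI = v - grade 1 (clmul w W) /\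
      16%:R *: grade 2 abI = w - grade 2 (clmul v W) + grade 2 (clmul (clmul w W) e) /\
      16%:R *: grade 3 abI =
        - (s *: W) + grade 3 (clmul (clmul v W) e) - grade 3 (clmul w W) /\
      16%:R *: grade 4 abI =
        s *: clmul W e - grade 4 (clmul v W) + grade 4 (clmul (clmul w W) e) /\
      16%:R *: grade 5 abI =
        grade 5 (clmul (clmul v W) e) - grade 5 (clmul w W) - clmul w e /\
      16%:R *: grade 6 abI = - clmul v e + grade 6 (clmul (clmul w W) e) /\
      16%:R *: grade 7 abI = - (s *: e))
  /\ (forall k : nat, (k <= 7)%N -> (grade k abI = 0 <-> grade (7 - k) abI = 0))
  /\ (grade 0 abI = 0 ->
        forall j1 j2 : nat, (2 <= j1 <= 5)%N -> (2 <= j2 <= 5)%N ->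
          (grade j1 abI = 0 <-> grade j2 abI = 0))
  /\ (grade 0 abI = 0 -> grade 1 abI = 0 -> grade 2 abI = 0 -> abI = 0).
Proof.
move=> abI W e s v w.
split; first exact: (part1 _ a0 b0 a b).
have hA : abI = (16%:R)^-1 *: evalS (env R a0 b0 a b) Xab by rewrite /abI (abI_eval _ a0 b0 a b).
have he : e = evalS (env R a0 b0 a b) Rel by rewrite /e (e_eval _ a0 b0 a b).
have hd : forall k, (k <= 7)%N -> grade (7 - k) abI = - clmul (grade k abI) e.
  move=> k hk; rewrite hA he; apply: dual_abs.
  by apply: (allP bigcheck3); rewrite mem_iota; lia.
have hz : forall j, (0 < j < 7)%N -> grade 0 abI = 0 -> grade j abI = 0 -> abI = 0.
  move=> j hj; rewrite hA.
  case/andP: bigcheck1 => /andP[/andP[c1 c2] c3] c4.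
  have /andP[c5 c6] : allcodes (gradeS j TT) && all (good (gradeS j TT) [:: 0%N]) (iota 1 7).
    by apply: (allP bigcheck2); rewrite mem_iota; lia.
  apply: (kill_main R (env R a0 b0 a b) Xab TT QQ j ((16%:R)^-1) _ c1 c2 c3 c5 c4 c6).
  by rewrite invr_eq0 pnatr_eq0.
split.
  move=> k hk; split => h.
    by rewrite hd // h clmul0l oppr0.
  by have := hd (7 - k)%N (leq_subr _ _); rewrite subKn // h clmul0l oppr0.
split.
  move=> h0 j1 j2 hj1 hj2; split => hj.
    by rewrite (hz j1) ?grade0 //; lia.
  by rewrite (hz j2) ?grade0 //; lia.
by move=> h0 h1 _; apply: (hz 1%N).
Qed.
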